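(* Let $Q$ be a $\partial_\psi$-delta operator with $\partial_\psi$-basic polynomial sequence $(q_n)$, let $S\in\Sigma_\psi$ be invertible and let $(s_n)$, $s_n=S^{-1}q_n$, be the Sheffer $\psi$-polynomials of $Q$ relative to $S$. Then for every $T\in\Sigma_\psi$, every $p\in P$ and every $y\in F$, $$T\,p(x+_\psi y)=\sum_{k\ge0}\frac{s_k(y)}{k_\psi!}\,Q^k\,S\,T\,p(x),$$ where $p(x+_\psi y):=(E^y(\partial_\psi)p)(x)$ and operators act in the variable $x$.
   Context: Let $F$ be a field of characteristic $0$, $P=F[x]$. Fix $(\psi_n)_{n\ge0}$ in $F$ with $\psi_0=1$, $\psi_n\ne0$, $\psi_{-1}=0$; $n_\psi=\psi_{n-1}/\psi_n$, $n_\psi!=1/\psi_n$, $0_\psi!=1$. $\partial_\psi x^n=n_\psi x^{n-1}$ (linear); $E^a(\partial_\psi)=\sum_k\frac{a^k}{k_\psi!}\partial_\psi^k$. $\Sigma_\psi$: algebra of linear operators on $P$ commuting with all $E^a(\partial_\psi)$. A $\partial_\psi$-delta operator is $Q\in\Sigma_\psi$ with $Q(x)$ a nonzero constant; its $\partial_\psi$-basic sequence: $\deg q_n=n$, $q_0=1$, $q_n(0)=0$ for $n>0$, $Qq_n=n_\psi q_{n-1}$. Sheffer $\psi$-polynomials of $Q$: $\deg s_n=n$, $s_0$ a nonzero constant, $Qs_n=n_\psi s_{n-1}$. *)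

(* Defs.v *)
From mathcomp Require Import all_boot all_order all_algebra.
Set Implicit Arguments. Unset Strict Implicit. Unset Printing Implicit Defensive.
Import GRing.Theory.
Local Open Scope ring_scope.

Section PsiCalculus.
Variable F : fieldType.
Variable psi : nat -> F.

(* n_psi = psi_{n-1}/psi_n, with psi_{-1} = 0, so 0_psi = 0 *)
Definition psinum (n : nat) : F :=
  match n with 0%N => 0 | m.+1 => psi m / psi m.+1 end.

Definition psifact (n : nat) : F := (psi n)^-1.

(* the linear operator x^n |-> n_psi x^(n-1) *)
Definition dpsi (p : {poly F}) : {poly F} :=
  \poly_(i < size p) (psinum i.+1 * p`_i.+1).

(* E^a(d_psi) p = sum_k a^k / k_psi! * d_psi^k p ; the terms with
   k >= size p vanish, so the sum is truncated there *)
Definition Epsi (a : F) (p : {poly F}) : {poly F} :=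
  \sum_(k < size p) ((a ^+ k / psifact k) *: iter k dpsi p).

Definition lin_op (T : {poly F} -> {poly F}) : Prop :=
  forall (c : F) (p q : {poly F}), T (c *: p + q) = c *: T p + T q.

Definition in_Sigma_psi (T : {poly F} -> {poly F}) : Prop :=
  lin_op T /\ forall (a : F) (p : {poly F}), T (Epsi a p) = Epsi a (T p).

Definition psi_delta (Q : {poly F} -> {poly F}) : Prop :=
  in_Sigma_psi Q /\ exists c : F, c != 0 /\ Q 'X = c%:P.

Definition psi_basic_seq (Q : {poly F} -> {poly F}) (q : nat -> {poly F}) : Prop :=
  [/\ forall n, size (q n) = n.+1,
      q 0%N = 1,
      forall n, (0 < n)%N -> (q n).[0] = 0
    & forall n, Q (q n) = psinum n *: q n.-1].

End PsiCalculus.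

(* Main.v *)
Require Import Defs.
From mathcomp Require Import all_boot all_order all_algebra.
From mathcomp Require Import ring.
Import GRing.Theory.
Local Open Scope ring_scope.
Set Implicit Arguments. Unset Strict Implicit.

Section Aux.
Variable F : fieldType.
Variable psi : nat -> F.
Hypothesis psi0 : psi 0%N = 1.
Hypothesis psi_nz : forall n, psi n != 0.

Lemma lin0 (L : {poly F} -> {poly F}) : lin_op L -> L 0 = 0.
Proof.
move=> HL; have h := HL 1 0 0; rewrite !scale1r addr0 in h.
by apply: (addrI (L 0)); rewrite addr0 -h.
Qed.

Lemma linZ (L : {poly F} -> {poly F}) c p : lin_op L -> L (c *: p) = c *: L p.
Proof. by move=> HL; have := HL c p 0; rewrite addr0 lin0 // addr0. Qed.

Lemma linD (L : {poly F} -> {poly F}) p r : lin_op L -> L (p + r) = L p + L r.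
Proof. by move=> HL; have := HL 1 p r; rewrite !scale1r. Qed.

Lemma lin_sum (L : {poly F} -> {poly F}) (I : Type) (r : seq I) (P : pred I)
  (f : I -> {poly F}) :
  lin_op L -> L (\sum_(i <- r | P i) f i) = \sum_(i <- r | P i) L (f i).
Proof.
move=> HL; elim: r => [|x r IH]; first by rewrite !big_nil lin0.
by rewrite !big_cons; case: (P x); rewrite ?linD // IH.
Qed.

Lemma lin_sumo (L : {poly F} -> {poly F}) m (f : 'I_m -> {poly F}) :
  lin_op L -> L (\sum_(i < m) f i) = \sum_(i < m) L (f i).
Proof. exact: lin_sum. Qed.

Lemma hsumo m (f : 'I_m -> {poly F}) x :
  (\sum_(i < m) f i).[x] = \sum_(i < m) (f i).[x].
Proof.
rewrite unlock; elim: (index_enum _) => [|z r IH] /=; first by rewrite horner0.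
by rewrite hornerD IH.
Qed.

Lemma lin_iter (L : {poly F} -> {poly F}) k : lin_op L -> lin_op (iter k L).
Proof.
move=> HL; elim: k => [|k IH] c p r //=.
by rewrite IH HL.
Qed.

Lemma dpsi_coef p i : (dpsi psi p)`_i = psi i / psi i.+1 * p`_i.+1.
Proof.
rewrite coef_poly; case: ltnP => // H.
by rewrite (leq_sizeP _ _ (leqW H) i.+1) // mulr0.
Qed.

Lemma iter_dpsi_coef k p i :
  (iter k (dpsi psi) p)`_i = psi i / psi (i + k)%N * p`_(i + k).
Proof.
elim: k i => [|k IH] i /=.
  by rewrite addn0 divff // mul1r.
rewrite dpsi_coef IH addSnnS.
have h1 := psi_nz i.+1; have h2 := psi_nz (i + k.+1).
by field; rewrite h1 h2.
Qed.

Lemma hsum (I : Type) (r : seq I) (P : pred I) (f : I -> {poly F}) x :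
  (\sum_(i <- r | P i) f i).[x] = \sum_(i <- r | P i) (f i).[x].
Proof.
elim: r => [|z r IH]; first by rewrite !big_nil horner0.
by rewrite !big_cons; case: (P z); rewrite ?hornerD IH.
Qed.
End Aux.
Section Aux2.
Variable F : fieldType.
Variable psi : nat -> F.
Hypothesis psi0 : psi 0%N = 1.
Hypothesis psi_nz : forall n, psi n != 0.

Lemma Epsi_coef a (p : {poly F}) m i : (size p <= m)%N ->
  (Epsi psi a p)`_i = \sum_(k < m) a ^+ k * psi k * (psi i / psi (i + k)%N * p`_(i + k)).
Proof.
move=> Hm; rewrite /Epsi coef_sum -(subnKC Hm) big_split_ord /=.
rewrite [X in _ = _ + X]big1 ?addr0.
  by apply: eq_bigr => k _; rewrite coefZ iter_dpsi_coef // /psifact invrK.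
move=> k _; rewrite (leq_sizeP _ _ (leqnn _) (i + (size p + k))) ?mulr0 //.
change (size p <= i + (size p + k))%N; by rewrite addnCA leq_addr.
Qed.

Lemma size_Epsi a (p : {poly F}) : (size (Epsi psi a p) <= size p)%N.
Proof.
apply/leq_sizeP => i Hi; rewrite (Epsi_coef a _ (leqnn _)).
apply: big1 => k _.
have -> : p`_(i + k)%N = 0.
  by apply: (leq_sizeP _ _ (leqnn _)); exact: leq_trans Hi (leq_addr _ _).
by rewrite !mulr0.
Qed.

Lemma Epsi_lin a : lin_op (Epsi psi a).
Proof.
move=> c p r; apply/polyP => i.
set m := maxn (size p) (size r).
have hp : (size p <= m)%N by rewrite leq_maxl.
have hr : (size r <= m)%N by rewrite leq_maxr.
have hpr : (size (c *: p + r)%R <= m)%N.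
  apply: leq_trans (size_polyD _ _) _; rewrite geq_max hr andbT.
  exact: leq_trans (size_scale_leq _ _) hp.
rewrite coefD coefZ (Epsi_coef a i hpr) (Epsi_coef a i hp) (Epsi_coef a i hr).
rewrite mulr_sumr -big_split /=; apply: eq_bigr => k _.
by rewrite coefD coefZ; ring.
Qed.

Lemma Epsi_at0 a (p : {poly F}) : (Epsi psi a p).[0] = p.[a].
Proof.
rewrite horner_coef0 (Epsi_coef a _ (leqnn _)) horner_coef.
apply: eq_bigr => k _; rewrite add0n psi0.
have h := psi_nz k; field; exact: h.
Qed.

Lemma Epsi_sym a b (p : {poly F}) : (Epsi psi a p).[b] = (Epsi psi b p).[a].
Proof.
rewrite (horner_coef_wide b (size_Epsi a p)) (horner_coef_wide a (size_Epsi b p)).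
under eq_bigr => i _ do rewrite (Epsi_coef a _ (leqnn _)) mulr_suml.
under [RHS]eq_bigr => i _ do rewrite (Epsi_coef b _ (leqnn _)) mulr_suml.
rewrite exchange_big /=; apply: eq_bigr => i _; apply: eq_bigr => k _.
by rewrite addnC; ring.
Qed.
End Aux2.
Section Aux3.
Variable F : fieldType.
Variable psi : nat -> F.
Hypothesis psi0 : psi 0%N = 1.
Hypothesis psi_nz : forall n, psi n != 0.
Variables (Q : {poly F} -> {poly F}) (q : nat -> {poly F}).
Hypothesis HQl : lin_op Q.
Hypothesis Hq : psi_basic_seq psi Q q.

Lemma q_span m (u : {poly F}) : (size u <= m)%N ->
  exists c : nat -> F, u = \sum_(i < m) c i *: q i.
Proof.
case: Hq => Hs Hq0 Hq1 HQq.
elim: m u => [|m IH] u Hu.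
  by exists (fun _ => 0); rewrite big_ord0; apply/size_poly_leq0P.
set c0 := u`_m / lead_coef (q m).
have Hlc : lead_coef (q m) != 0 by rewrite lead_coef_eq0 -size_poly_eq0 Hs.
have Hu' : (size (u - c0 *: q m)%R <= m)%N.
  apply/leq_sizeP => j Hj; rewrite coefB coefZ.
  case: (ltngtP m j) Hj => // [Hmj _|<- _].
    have Hqm : (size (q m) <= m.+1)%N by rewrite Hs.
    by rewrite (leq_sizeP _ _ Hu j Hmj) (leq_sizeP _ _ Hqm j Hmj) mulr0 subr0.
  rewrite /c0 /lead_coef Hs /= -mulrA mulVf ?mulr1 ?subrr //.
  by move: Hlc; rewrite /lead_coef Hs.
have [c Hc] := IH _ Hu'.
exists (fun i => if i == m then c0 else c i).
rewrite big_ord_recr /= eqxx.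
under eq_bigr => i _ do rewrite ltn_eqF //.
by rewrite -Hc subrK.
Qed.

Lemma size_Q m (u : {poly F}) : (size u <= m.+1)%N -> (size (Q u) <= m)%N.
Proof.
case: (Hq) => Hs Hq0 Hq1 HQq.
move=> /q_span [c ->]; rewrite (lin_sum (L:=Q)) //.
apply: (big_ind (fun x : {poly F} => size x <= m)%N) => //.
- by rewrite size_poly0.
- move=> x y Hx Hy; apply: leq_trans (size_polyD _ _) _; by rewrite geq_max Hx Hy.
move=> i _; rewrite linZ // HQq scalerA.
case: i => [[|i] Hi] /=.
  by rewrite /psinum mulr0 scale0r size_poly0.
by apply: leq_trans (size_scale_leq _ _) _; rewrite Hs.
Qed.

Lemma iterQ0 k (u : {poly F}) : (size u <= k)%N -> iter k Q u = 0.
Proof.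
elim: k u => [|k IH] u Hu; first by apply/size_poly_leq0P.
by rewrite iterSr IH // size_Q.
Qed.

Lemma iterQq k i : (k <= i)%N -> iter k Q (q i) = (psi (i - k) / psi i) *: q (i - k).
Proof.
case: (Hq) => Hs Hq0 Hq1 HQq.
elim: k => [|k IH] Hk /=; first by rewrite subn0 divff // scale1r.
rewrite IH ?(ltnW Hk) // linZ // HQq scalerA.
have -> : (i - k).-1 = (i - k.+1)%N by rewrite subnS.
congr (_ *: _).
have -> : (i - k)%N = (i - k.+1).+1 by rewrite subnS prednK // subn_gt0.
rewrite /psinum.
have h1 := psi_nz (i - k.+1).+1; have h2 := psi_nz i.
by field; rewrite h1 h2.
Qed.

Lemma iterQq0 k i : (iter k Q (q i)).[0] = if k == i then (psi i)^-1 else 0.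
Proof.
case: (Hq) => Hs Hq0 Hq1 HQq.
case: (ltngtP k i) => Hki.
- by rewrite iterQq ?(ltnW Hki) // hornerZ Hq1 ?mulr0 // subn_gt0.
- by rewrite iterQ0 ?horner0 // Hs.
- by rewrite Hki iterQq // subnn Hq0 psi0 hornerZ hornerC mulr1 div1r.
Qed.
End Aux3.
Section Aux4.
Variable F : fieldType.
Variable psi : nat -> F.
Hypothesis charF : [pchar F] =i pred0.
Hypothesis psi0 : psi 0%N = 1.
Hypothesis psi_nz : forall n, psi n != 0.
Variables (Q : {poly F} -> {poly F}) (q : nat -> {poly F}).
Hypothesis HQ : in_Sigma_psi psi Q.
Hypothesis Hq : psi_basic_seq psi Q q.
Variables (S Sinv : {poly F} -> {poly F}).
Hypothesis HS : in_Sigma_psi psi S.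
Hypothesis HSinv : lin_op Sinv.
Hypothesis HSinvS : forall p, Sinv (S p) = p.
Variable y : F.

Definition W n (r : {poly F}) :=
  \sum_(k < n) (((Sinv (q k)).[y] / psifact psi k) *: iter k Q (S r)).

Lemma iterQ_Epsi k a u : iter k Q (Epsi psi a u) = Epsi psi a (iter k Q u).
Proof. by elim: k => //= k ->; case: HQ => _ ->. Qed.

Lemma W_Epsi n a r : Epsi psi a (W n r) = W n (Epsi psi a r).
Proof.
rewrite /W (lin_sum (L:=Epsi psi a)); last exact: Epsi_lin psi_nz a.
apply: eq_bigr => k _; rewrite linZ; last exact: Epsi_lin psi_nz a.
by case: HS => _ ->; rewrite iterQ_Epsi.
Qed.

Lemma W_at0 n t : (size (S t) <= n)%N -> (W n t).[0] = t.[y].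
Proof.
have HQl : lin_op Q by case: HQ.
move=> /(q_span Hq) [c Hc].
rewrite -[in RHS](HSinvS t) Hc (lin_sumo (L:=Sinv)) // hsumo.
rewrite /W Hc hsumo.
apply: eq_bigr => k _.
rewrite hornerZ (lin_sumo (L:=iter k Q)); last exact: lin_iter.
rewrite hsumo.
under eq_bigr => i _ do rewrite (linZ _ _ (lin_iter k HQl)) hornerZ (iterQq0 psi0 psi_nz HQl Hq).
rewrite (bigD1 k) //= eqxx big1 ?addr0.
  rewrite linZ // hornerZ /psifact invrK.
  have h := psi_nz k; by field.
move=> i Hik; rewrite ifF ?mulr0 //.
by apply/negbTE; rewrite eq_sym.
Qed.

Lemma poly_eq_ev (p r : {poly F}) : (forall a, p.[a] = r.[a]) -> p = r.
Proof.
move=> H; apply/eqP; rewrite -subr_eq0; apply/negPn/negP => Hd.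
set d := p - r.
pose rs := [seq (i%:R : F) | i <- iota 0 (size d)].
have H1 : all (root d) rs.
  by apply/allP => x /mapP [i _ ->]; rewrite /root /d hornerD hornerN H subrr.
have H2 : uniq rs.
  rewrite map_inj_uniq ?iota_uniq //.
  have Hc := (pcharf0P F).1 charF.
  move=> m n Hmn; apply/eqP; wlog Hle : m n Hmn / (m <= n)%N.
    move=> Hw; case: (leqP m n) => h; first exact: Hw.
    by rewrite eq_sym; apply: Hw => //; exact: ltnW.
  by rewrite eqn_leq Hle /= -subn_eq0 -Hc natrB // Hmn subrr eqxx.
have := max_poly_roots Hd H1 H2.
by rewrite size_map size_iota ltnn.
Qed.

Lemma key n r : (size (S r) <= n)%N -> Epsi psi y r = W n r.
Proof.
move=> Hn; apply: poly_eq_ev => a.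
rewrite -(Epsi_at0 psi0 psi_nz a (W n r)) W_Epsi W_at0.
  by rewrite (Epsi_sym psi_nz).
case: HS => _ ->; exact: leq_trans (size_Epsi psi_nz _ _) Hn.
Qed.
End Aux4.
Unset Implicit Arguments.

Theorem mainTheorem15 (F : fieldType) (psi : nat -> F)
  (charF : [pchar F] =i pred0)
  (psi0 : psi 0%N = 1) (psi_nz : forall n, psi n != 0)
  (Q : {poly F} -> {poly F}) (q : nat -> {poly F})
  (HQ : psi_delta psi Q) (Hq : psi_basic_seq psi Q q)
  (S Sinv : {poly F} -> {poly F})
  (HS : in_Sigma_psi psi S) (HSinv : lin_op Sinv)
  (HSSinv : forall p, S (Sinv p) = p) (HSinvS : forall p, Sinv (S p) = p)
  (T : {poly F} -> {poly F}) (HT : in_Sigma_psi psi T)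
  (p : {poly F}) (y : F) :
  let s := fun n => Sinv (q n) in
  exists N : nat, forall n : nat, (N <= n)%N ->
    T (Epsi psi y p) =
    \sum_(k < n) (((s k).[y] / psifact psi k) *: iter k Q (S (T p))).
Proof.
move=> s; exists (size (S (T p))) => n Hn.
case: HT => _ ->.
exact: (key charF psi0 psi_nz HQ.1 Hq HS HSinv HSinvS y Hn).
Qed.
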